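(* Let $0<\alpha<1$, $\bar\alpha=1-\alpha$, $c=(1+\bar\alpha\alpha^{\alpha/\bar\alpha})^{-1}$. Define functions $P_0,P_1$ on $\{0,1\}^n$ for all $n\ge0$ recursively by $P_0(\emptyset)=P_1(\emptyset)=1$ and, for $u\in\{0,1\}^{n-1}$, $P_0(0,u)=c\big(P_0(u)-\alpha^{1/\bar\alpha}P_1(u)\big)$, $P_0(1,u)=c\,\alpha^{\alpha/\bar\alpha}P_1(u)$, $P_1(0,u)=c\,\alpha^{\alpha/\bar\alpha}P_0(u)$, $P_1(1,u)=c\big(P_1(u)-\alpha^{1/\bar\alpha}P_0(u)\big)$. Then there exists $\beta$ with $1\le\beta\le\alpha^{-1/\bar\alpha}$ such that for every $n\ge1$: if $\beta P_1(u)\ge P_0(u)$ and $\beta P_0(u)\ge P_1(u)$ for all $u\in\{0,1\}^{n-1}$, then $\beta P_1(x)\ge P_0(x)$ and $\beta P_0(x)\ge P_1(x)$ for all $x\in\{0,1\}^n$.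
   Context: $(0,u)$ denotes the sequence with first coordinate $0$ followed by $u$. *)

(* Defs.v *)
From Stdlib Require Import Reals List.
Open Scope R_scope.

Definition cst (alpha : R) : R :=
  / (1 + (1 - alpha) * Rpower alpha (alpha / (1 - alpha))).

(* Elements of {0,1}^n are lists of booleans of length n
   (false = 0, true = 1); the head is the first coordinate, so
   (b :: u) is the sequence (b,u).  PP alpha u = (P_0(u), P_1(u)). *)
Fixpoint PP (alpha : R) (u : list bool) : R * R :=
  match u with
  | nil => (1, 1)
  | b :: u' =>
      let p0 := fst (PP alpha u') in
      let p1 := snd (PP alpha u') in
      let c := cst alpha in
      let e1 := Rpower alpha (alpha / (1 - alpha)) in
      let e2 := Rpower alpha (1 / (1 - alpha)) in
      if b then (c * e1 * p1, c * (p1 - e2 * p0))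
      else (c * (p0 - e2 * p1), c * e1 * p0)
  end.

Definition P0 (alpha : R) (u : list bool) : R := fst (PP alpha u).
Definition P1 (alpha : R) (u : list bool) : R := snd (PP alpha u).

(* Main.v *)
Require Import Defs.
From Stdlib Require Import Reals List Lra Psatz.
Open Scope R_scope.

Lemma ln_le_m1 (s : R) : 0 < s -> ln s <= s - 1.
Proof.
  intro Hs. destruct (Req_dec (ln s) 0) as [E|E].
  - rewrite E. assert (s = 1). { rewrite <- (exp_ln s Hs), E. apply exp_0. } lra.
  - pose proof (exp_ineq1 _ E). rewrite exp_ln in H by exact Hs. lra.
Qed.

Lemma exp85 : 4 < exp (8/5).
Proof.
  assert (H1 : 6/5 < exp (1/5)) by (pose proof (exp_ineq1 (1/5)); lra).
  assert (E2 : exp (2/5) = exp (1/5) * exp (1/5)) by (rewrite <- exp_plus; f_equal; lra).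
  assert (E4 : exp (4/5) = exp (2/5) * exp (2/5)) by (rewrite <- exp_plus; f_equal; lra).
  assert (E8 : exp (8/5) = exp (4/5) * exp (4/5)) by (rewrite <- exp_plus; f_equal; lra).
  assert (exp (2/5) > 36/25) by (rewrite E2; nra).
  assert (exp (4/5) > 1296/625) by (rewrite E4; nra).
  rewrite E8; nra.
Qed.

Lemma keybound (a : R) : 0 < a < 1 ->
  4 * a * Rpower a (a / (1 - a)) * Rpower a (a / (1 - a)) <= 1.
Proof.
  intros Ha.
  set (L := ln a).
  assert (Ea : a = exp L) by (unfold L; rewrite exp_ln; lra).
  assert (Eq : a * Rpower a (a / (1 - a)) * Rpower a (a / (1 - a))
              = exp ((1 + a) / (1 - a) * L)).
  { unfold Rpower. fold L. rewrite Ea at 1. rewrite <- !exp_plus. f_equal. field. lra. }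
  set (s := sqrt a).
  assert (Hs : 0 < s) by (apply sqrt_lt_R0; lra).
  assert (Hss : s * s = a) by (apply sqrt_sqrt; lra).
  assert (Hs1 : s < 1).
  { destruct (Rlt_or_le s 1); auto. nra. }
  assert (HL : L <= 2 * (s - 1)).
  { unfold L. rewrite <- Hss, ln_mult by lra. pose proof (ln_le_m1 s Hs). lra. }
  assert (Hx : (1 + a) / (1 - a) * L <= - (8/5)).
  { assert (0 < (1 + a) / (1 - a)) by (apply Rdiv_lt_0_compat; lra).
    apply Rle_trans with ((1 + a) / (1 - a) * (2 * (s - 1))).
    - apply Rmult_le_compat_l; lra.
    - rewrite <- Hss.
      replace ((1 + s * s) / (1 - s * s) * (2 * (s - 1))) with (- (2 * (1 + s * s) / (1 + s)))
        by (field; nra).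
      assert (2 * (1 + s * s) / (1 + s) >= 8/5).
      { apply Rle_ge. apply Rmult_le_reg_r with (1 + s); [lra|].
        replace (2 * (1 + s * s) / (1 + s) * (1 + s)) with (2 * (1 + s * s)) by (field; lra).
        pose proof (pow2_ge_0 (5 * s - 2)). nra. }
      lra. }
  assert (exp ((1 + a) / (1 - a) * L) <= exp (- (8/5))).
  { destruct (Req_dec ((1 + a) / (1 - a) * L) (-(8/5))) as [E|E].
    rewrite E; lra. left; apply exp_increasing; lra. }
  rewrite exp_Ropp in H.
  pose proof exp85.
  assert (/ exp (8/5) < /4) by (apply Rinv_lt_contravar; lra).
  replace (4 * a * Rpower a (a / (1 - a)) * Rpower a (a / (1 - a)))
    with (4 * (a * Rpower a (a / (1 - a)) * Rpower a (a / (1 - a)))) by ring.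
  rewrite Eq. lra.
Qed.

Lemma step (a t c b p0 p1 : R) : 0 < a < 1 -> 0 < c -> 1 < b ->
  a * t * b * b - b + t <= 0 -> b >= t * (1 + a) ->
  b * t * (1 + a) >= 1 -> t * b * b - b + a * t >= 0 ->
  b * p1 >= p0 -> b * p0 >= p1 ->
  b * (c * t * p0) >= c * (p0 - a * t * p1) /\
  b * (c * (p0 - a * t * p1)) >= c * t * p0.
Proof.
  intros Ha Hc Hb HA HB HC HD H1 H2.
  set (y1 := b * p1 - p0). set (y2 := b * p0 - p1).
  assert (Hy1 : 0 <= y1) by (unfold y1; lra).
  assert (Hy2 : 0 <= y2) by (unfold y2; lra).
  assert (Hbb : 0 < b * b - 1) by nra.
  assert (E1 : (b * b - 1) * (b * t * p0 - p0 + a * t * p1)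
     = (b * t * (1 + a) - 1) * y1 + (t * b * b - b + a * t) * y2)
    by (unfold y1, y2; ring).
  assert (E2 : (b * b - 1) * (b * p0 - a * t * b * p1 - t * p0)
     = (- (a * t * b * b - b + t)) * y1 + (b * (b - t * (1 + a))) * y2)
    by (unfold y1, y2; ring).
  assert (0 <= (b * b - 1) * (b * t * p0 - p0 + a * t * p1)).
  { rewrite E1. apply Rplus_le_le_0_compat; apply Rmult_le_pos; lra. }
  assert (0 <= (b * b - 1) * (b * p0 - a * t * b * p1 - t * p0)).
  { rewrite E2. apply Rplus_le_le_0_compat; apply Rmult_le_pos; nra. }
  assert (0 <= b * t * p0 - p0 + a * t * p1).
  { destruct (Rle_or_lt 0 (b * t * p0 - p0 + a * t * p1)); auto. nra. }
  assert (0 <= b * p0 - a * t * b * p1 - t * p0).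
  { destruct (Rle_or_lt 0 (b * p0 - a * t * b * p1 - t * p0)); auto. nra. }
  split; nra.
Qed.

Theorem lemma4 (alpha : R) (Ha : 0 < alpha < 1) :
  exists beta : R,
    1 <= beta <= Rpower alpha (- (1 / (1 - alpha))) /\
    forall n : nat, (1 <= n)%nat ->
      (forall u : list bool, length u = (n - 1)%nat ->
         beta * P1 alpha u >= P0 alpha u /\ beta * P0 alpha u >= P1 alpha u) ->
      forall x : list bool, length x = n ->
         beta * P1 alpha x >= P0 alpha x /\ beta * P0 alpha x >= P1 alpha x.
Proof.
  set (t := Rpower alpha (alpha / (1 - alpha))).
  assert (Ht : 0 < t) by (unfold t, Rpower; apply exp_pos).
  assert (He2 : Rpower alpha (1 / (1 - alpha)) = alpha * t).
  { unfold t. replace (1 / (1 - alpha)) with (1 + alpha / (1 - alpha)) by (field; lra).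
    rewrite Rpower_plus, Rpower_1 by lra. reflexivity. }
  assert (Hinv : Rpower alpha (- (1 / (1 - alpha))) = / (alpha * t))
    by (rewrite Rpower_Ropp, He2; reflexivity).
  assert (HK : 4 * alpha * t * t <= 1) by (apply keybound; exact Ha).
  set (d := sqrt (1 - 4 * alpha * t * t)).
  assert (Hd0 : 0 <= d) by apply sqrt_pos.
  assert (Hdd : d * d = 1 - 4 * alpha * t * t) by (apply sqrt_sqrt; lra).
  assert (Hd1 : d <= 1) by nra.
  set (g := 2 * alpha * t).
  assert (Hg : 0 < g) by (unfold g; nra).
  set (beta := (1 + d) / g).
  assert (Hbg : beta * g = 1 + d) by (unfold beta; field; lra).
  assert (HA : alpha * t * beta * beta - beta + t = 0).
  { apply Rmult_eq_reg_r with (g * g); [| nra].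
    replace ((alpha * t * beta * beta - beta + t) * (g * g)) with
      (alpha * t * (beta * g) * (beta * g) - (beta * g) * g + t * g * g) by ring.
    rewrite Hbg. unfold g. nra. }
  assert (HB : beta >= t * (1 + alpha)).
  { apply Rle_ge. apply Rmult_le_reg_r with g; auto. rewrite Hbg. unfold g. nra. }
  assert (HC : beta * t * (1 + alpha) >= 1).
  { apply Rle_ge. apply Rmult_le_reg_r with (2 * alpha); [lra|].
    replace (beta * t * (1 + alpha) * (2 * alpha)) with (beta * g * (1 + alpha))
      by (unfold g; ring).
    rewrite Hbg. nra. }
  assert (HD : t * beta * beta - beta + alpha * t >= 0).
  { apply Rle_ge. apply Rmult_le_reg_r with alpha; [lra|].
    replace ((t * beta * beta - beta + alpha * t) * alpha) with
      ((alpha * t * beta * beta - beta + t) + (1 - alpha) * (beta - t * (1 + alpha)))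
      by ring.
    rewrite HA. nra. }
  assert (Hb1 : 1 < beta).
  { apply Rmult_lt_reg_r with g; auto. rewrite Hbg. unfold g.
    destruct (Rlt_or_le (2 * alpha * t) 1); [lra|]. nra. }
  assert (Hc : 0 < cst alpha).
  { unfold cst. apply Rinv_0_lt_compat. fold t. nra. }
  exists beta. split.
  { split; [lra|]. rewrite Hinv.
    apply Rmult_le_reg_r with (alpha * t); [nra|].
    rewrite Rinv_l by nra.
    replace (beta * (alpha * t)) with (beta * g / 2) by (unfold g; field).
    rewrite Hbg. lra. }
  intros n Hn H x Hx.
  destruct x as [|b u]; [simpl in Hx; lia|].
  simpl in Hx.
  destruct (H u) as [H1 H2]; [lia|].
  unfold P0, P1 in *. simpl. fold t. rewrite He2.
  destruct (PP alpha u) as [p0 p1]. simpl in *.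
  destruct b; simpl.
  - destruct (step alpha t (cst alpha) beta p1 p0 Ha Hc Hb1 (Req_le _ _ HA) HB HC HD H2 H1); split; lra.
  - destruct (step alpha t (cst alpha) beta p0 p1 Ha Hc Hb1 (Req_le _ _ HA) HB HC HD H1 H2); split; lra.
Qed.
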